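(* There exists a continuous, $2$-periodic matrix function $A:\mathbb{R}\to\mathbb{R}^{2\times 2}$ such that for every $t\in\mathbb{R}$ the off-diagonal entries of $A(t)$ are positive and the larger (principal) eigenvalue of $A(t)$ equals $-\tfrac12$, and yet the system $x'=A(t)x$ has a solution $x(t)$ with $\|x(2n)\|\to\infty$ as $n\to\infty$ ($n\in\mathbb{N}$).
   Context: A $2\times2$ real matrix with positive off-diagonal entries has two distinct real eigenvalues; the larger is called its principal eigenvalue. $\|\cdot\|$ denotes the Euclidean norm on $\mathbb{R}^2$. *)

(* Defs.v *)
From Stdlib Require Import Reals.
From Coquelicot Require Import Coquelicot.
From mathcomp Require Import all_boot all_algebra.
From mathcomp Require Import Rstruct.

Set Implicit Arguments.
Unset Strict Implicit.
Unset Printing Implicit Defensive.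

Definition principal_eigenvalue (M : 'M[R]_2) (l : R) : Prop :=
  eigenvalue M l /\ (forall m : R, eigenvalue M m -> Rle m l).

Definition norm2 (v : 'cV[R]_2) : R :=
  sqrt (Rplus (Rsqr (v ord0 ord0)) (Rsqr (v (@Ordinal 2 1 isT) ord0))).

Definition is_solution (A : R -> 'M[R]_2) (x : R -> 'cV[R]_2) : Prop :=
  forall (t : R) (i : 'I_2),
    is_derive (fun s => x s i ord0) t ((mulmx (A t) (x t)) i ord0).

(* Main.v *)
Require Import Defs.
From Stdlib Require Import Reals Lra FunctionalExtensionality.
From Coquelicot Require Import Coquelicot.
From mathcomp Require Import all_boot all_algebra.
From mathcomp Require Import Rstruct.
Local Open Scope R_scope.

Lemma addRE (x y : R) : (x + y)%R = Rplus x y. Proof. reflexivity. Qed.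
Lemma mulRE (x y : R) : (x * y)%R = Rmult x y. Proof. reflexivity. Qed.
Lemma oppRE (x : R) : (- x)%R = Ropp x. Proof. reflexivity. Qed.
Lemma zeroRE : (0%R : R) = R0. Proof. reflexivity. Qed.

Definition i1 : 'I_2 := @Ordinal 2 1 isT.

Lemma abs_eig (M : 'M[R]_2) (u w : nat -> R) :
  0 < u 0%N -> u 1%N < 0 -> w 0%N < 0 -> 0 < w 1%N ->
  (forall i j : 'I_2, M i j = (if (i == j :> nat) then -(1/2) else 0) + u i * w j) ->
  principal_eigenvalue M (-(1/2)).
Proof.
move=> u0 u1 w0 w1 HM; split.
- apply/eigenvalueP; exists (\row_(j < 2) (if (j == 0 :> nat) then - u 1%N else u 0%N))%R.
  + apply/rowP => j; rewrite !mxE !big_ord_recl big_ord0 !mxE !HM.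
    case: j => [[|[|j]] Hj] //=; rewrite ?addRE ?mulRE ?oppRE ?zeroRE; change (bump 0 0) with 1%N; lra.
  + apply/negP => /eqP /rowP /(_ ord0); rewrite !mxE /= ?oppRE ?zeroRE; lra.
- move=> m /eigenvalueP [v Hv Hv0].
  have E0 := congr1 (fun A : 'rV[R]_2 => A ord0 ord0) Hv.
  have E1 := congr1 (fun A : 'rV[R]_2 => A ord0 i1) Hv.
  have L1 : lift ord0 ord0 = i1 :> 'I_2 by apply: val_inj.
  move: E0 E1; rewrite /= !mxE !big_ord_recl !big_ord0 L1 !HM /= ?addRE ?mulRE ?oppRE ?zeroRE; change (bump 0 0) with 1%N.
  have Hnz : v ord0 ord0 <> 0 \/ v ord0 i1 <> 0.
  { case: (Req_dec (v ord0 ord0) 0) => h0; last by left.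
    case: (Req_dec (v ord0 i1) 0) => h1; last by right.
    exfalso; move/negP: Hv0; apply; apply/eqP/rowP => j; rewrite !mxE.
    case: j => [[|[|j]] Hj] //=.
    - by have -> : Ordinal Hj = ord0 by apply: val_inj.
    - by have -> : Ordinal Hj = i1 by apply: val_inj. }
  set a := v ord0 ord0 in Hnz *; set b := v ord0 _ in Hnz *.
  move=> E0 E1.
  destruct (Rle_dec m (-(1/2))) as [|Hm]; first done.
  exfalso.
  set p := a * u 0%N + b * u 1%N.
  have F0 : p * w 0%N = (m + 1/2) * a by rewrite /p; lra.
  have F1 : p * w 1%N = (m + 1/2) * b by rewrite /p; lra.
  have Hp : p * (u 0%N * w 0%N + u 1%N * w 1%N - (m + 1/2)) = 0.
  { have : (m+1/2) * p = p * w 0%N * u 0%N + p * w 1%N * u 1%N.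
    { rewrite F0 F1 /p; ring. }
    move=> H; rewrite -[LHS]/(p * (u 0%N * w 0%N + u 1%N * w 1%N - (m + 1/2))); nra. }
  have neg : u 0%N * w 0%N + u 1%N * w 1%N - (m + 1/2) < 0.
  { have : u 0%N * w 0%N < 0 by nra. have : u 1%N * w 1%N < 0 by nra. lra. }
  have p0 : p = 0.
  { case: (Rmult_integral _ _ Hp) => // H; lra. }
  rewrite p0 in F0 F1.
  case: Hnz => H; apply: H.
  - have: (m + 1/2) * a = 0 by lra. move=> /Rmult_integral [|]; lra.
  - have: (m + 1/2) * b = 0 by lra. move=> /Rmult_integral [|]; lra.
Qed.

Definition cc t := cos (PI * t).
Definition ss t := sin (PI * t).
Definition ff t := 8 / PI * ss t.
Definition gg t := (2 * ss t * cc t - 15/2 * ss t) / PI.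
Definition hh t := 1 - cc t / 2.
Definition uu t (i : nat) : R := if i is 0%N then exp (ff t) else - (exp (gg t) * hh t).
Definition ww t (i : nat) : R := if i is 0%N then - (8 / exp (ff t)) else (9 + 8 * cc t) / exp (gg t).
Definition ent t (i j : nat) : R :=
  match i, j with
  | 0%N, 0%N => - (1/2) + uu t 0 * ww t 0
  | 0%N, _ => uu t 0 * ww t 1
  | _, 0%N => uu t 1 * ww t 0
  | _, _ => - (1/2) + uu t 1 * ww t 1
  end.
Definition Amat t : 'M[R]_2 := (\matrix_(i < 2, j < 2) ent t i j)%R.
Definition xv t (i : nat) : R := if i is 0%N then exp (t/2) * exp (ff t) else exp (t/2) * exp (gg t).
Definition xs t : 'cV[R]_2 := (\matrix_(i < 2, j < 1) xv t i)%R.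

Lemma gg_deriv t : is_derive gg t (-2 - 15/2 * cc t + 4 * cc t * cc t).
Proof.
rewrite /gg /ss /cc. auto_derive; first trivial.
have H := sin2_cos2 (PI*t); unfold Rsqr in H.
have HP := PI_RGT_0.
have H2 : sin (PI*t)^2 = 1 - cos (PI*t)^2 by nra.
field_simplify; try lra. rewrite H2; field; lra.
Qed.

Lemma ff_deriv t : is_derive ff t (8 * cc t).
Proof.
rewrite /ff /ss /cc. auto_derive; first trivial.
have HP := PI_RGT_0. field; lra.
Qed.

Lemma cc_per t : cc (t + 2) = cc t.
Proof. rewrite /cc -(cos_period (PI * t) 1); congr cos; simpl; ring. Qed.
Lemma ss_per t : ss (t + 2) = ss t.
Proof. rewrite /ss -(sin_period (PI * t) 1); congr sin; simpl; ring. Qed.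

Lemma ent_cont (i j : nat) t : continuous (fun s => ent s i j) t.
Proof.
apply: ex_derive_continuous.
have Hf := ff_deriv. have Hg := gg_deriv.
have ef : forall t, ex_derive ff t by move=> s; eexists; apply: ff_deriv.
have eg : forall t, ex_derive gg t by move=> s; eexists; apply: gg_deriv.
case: i => [|i]; case: j => [|j]; rewrite /ent /uu /ww /hh /cc;
  auto_derive; repeat split; auto; apply: exp_neq_0.
Qed.

Lemma xv_deriv0 t : is_derive (fun s => xv s 0) t (ent t 0 0 * xv t 0 + ent t 0 1 * xv t 1).
Proof.
have ef : ex_derive ff t by eexists; apply: ff_deriv.
rewrite /xv /ent /uu /ww /=. auto_derive; first by [].
rewrite (is_derive_unique _ _ _ (ff_deriv t)).
have e1 := exp_neq_0 (ff t). have e2 := exp_neq_0 (gg t).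
change (Rmult (Rmult (Rmult 1 (Rinv 2)) (exp (t * / 2))) (exp (ff t)) + exp (t * / 2) * (1 * (8 * cc t) * exp (ff t)) = (- (1 / 2) + exp (ff t) * - (8 / exp (ff t))) * (exp (t / 2) * exp (ff t)) + exp (ff t) * ((9 + 8 * cc t) / exp (gg t)) * (exp (t / 2) * exp (gg t))). rewrite -/(Rdiv t 2). set a := exp (ff t) in e1 *. set b := exp (gg t) in e2 *. set c := exp (t/2). field; auto.
Qed.

Lemma xv_deriv1 t : is_derive (fun s => xv s 1) t (ent t 1 0 * xv t 0 + ent t 1 1 * xv t 1).
Proof.
have eg : ex_derive gg t by eexists; apply: gg_deriv.
rewrite /xv /ent /uu /ww /hh /=. auto_derive; first by [].
rewrite (is_derive_unique _ _ _ (gg_deriv t)).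
have e1 := exp_neq_0 (ff t). have e2 := exp_neq_0 (gg t).
rewrite -/(Rdiv t 2). set a := exp (ff t) in e1 *. set b := exp (gg t) in e2 *. set c := exp (t/2). field; auto.
Qed.

Theorem mainTheorem2 :
  exists A : R -> 'M[R]_2,
    (forall i j : 'I_2, forall t : R, continuous (fun s => A s i j) t) /\
    (forall t : R, A (t + 2) = A t) /\
    (forall t : R, forall i j : 'I_2, i <> j -> 0 < A t i j) /\
    (forall t : R, principal_eigenvalue (A t) (- (1 / 2))) /\
    exists x : R -> 'cV[R]_2,
      is_solution A x /\
      is_lim_seq (fun n : nat => norm2 (x (2 * INR n))) p_infty.
Proof.
exists Amat; split; [|split; [|split; [|split]]].
- move=> i j t.
  have -> : (fun s => Amat s i j) = (fun s => ent s i j).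
  { apply: functional_extensionality => s; by rewrite /Amat mxE. }
  apply: ent_cont.
- move=> t; apply/matrixP => i j; rewrite /Amat !mxE.
  by rewrite /ent /uu /ww /ff /gg /hh !cc_per !ss_per.
- move=> t i j Hij; rewrite /Amat mxE.
  have e1 := exp_pos (ff t). have e2 := exp_pos (gg t).
  have Hc := COS_bound (PI * t). rewrite -/(cc t) in Hc.
  case: i Hij => [[|[|i]] Hi] //; case: j => [[|[|j]] Hj] // Hij;
    try (exfalso; apply: Hij; apply: val_inj; reflexivity);
    rewrite /ent /uu /ww /hh /=.
  + apply: Rmult_lt_0_compat; first lra.
    apply: Rdiv_lt_0_compat; lra.
  + have : 0 < 8 / exp (ff t) by apply: Rdiv_lt_0_compat; lra.
    have : 0 < exp (gg t) * (1 - cc t / 2) by apply: Rmult_lt_0_compat; lra.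
    nra.
- move=> t; apply: (@abs_eig (Amat t) (uu t) (ww t)).
  + rewrite /uu; apply: exp_pos.
  + rewrite /uu /hh. have := exp_pos (gg t). have Hc := COS_bound (PI * t). rewrite -/(cc t) in Hc. nra.
  + rewrite /ww. have : 0 < 8 / exp (ff t) by apply: Rdiv_lt_0_compat; [lra|apply: exp_pos]. lra.
  + rewrite /ww. have Hc := COS_bound (PI * t). rewrite -/(cc t) in Hc.
    apply: Rdiv_lt_0_compat; [lra|apply: exp_pos].
  + move=> i j; rewrite /Amat mxE.
    case: i => [[|[|i]] Hi] //; case: j => [[|[|j]] Hj] //=; rewrite ?addRE ?zeroRE; lra.
- exists xs; split.
  + move=> t i.
    have HR : ((Amat t *m xs t) i ord0)%R = ent t i 0 * xv t 0 + ent t i 1 * xv t 1.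
    { rewrite !mxE !big_ord_recl !big_ord0 /= !mxE /= ?addRE ?mulRE ?zeroRE.
      change (bump 0 0) with 1%N; ring. }
    rewrite HR.
    apply: (is_derive_ext (fun s => xv s i)); first by move=> s; rewrite /xs mxE.
    case: i {HR} => [[|[|i]] Hi] //=; [apply: xv_deriv0 | apply: xv_deriv1].
  + apply: (is_lim_seq_le_p_loc (fun n => INR n)); last exact: is_lim_seq_INR.
    exists 0%N => n _.
    rewrite /norm2 /xs !mxE /=.
    have Hf : ff (2 * INR n) = 0.
    { rewrite /ff /ss.
      have -> : PI * (2 * INR n) = 0 + 2 * INR n * PI by ring.
      rewrite sin_period sin_0; ring. }
    rewrite Hf exp_0 Rmult_1_r.
    have -> : 2 * INR n / 2 = INR n by field.
    apply: Rle_trans (_ : exp (INR n) <= _).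
    * have := exp_ineq1_le (INR n). lra.
    * rewrite -[X in X <= _]sqrt_Rsqr; last by apply: Rlt_le; apply: exp_pos.
      apply: sqrt_le_1_alt. rewrite -{1}(Rplus_0_r (_²)); apply: Rplus_le_compat_l; apply: Rle_0_sqr.
Qed.
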